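(* Let \[ Q(\tau)=\frac1{R_gT_\infty}\Big(\frac{4\pi}3-\frac{8(\gamma-1)}{\pi\gamma}\sum_{j\ge1}\frac{\tau}{j^2(\pi^2\bar\kappa j^2+\tau)}\Big)\Big(\rho_lR_*\tau^2+\frac{4\mu_l}{R_*}\tau-\frac{2\sigma}{R_*^2}\Big)+4\pi\frac{\rho_*}{R_*}, \] a meromorphic function of $\tau\in\mathbb C$. There exists $\phi\in(\pi/2,\pi)$ such that all roots of $Q$ lie in the sector $S_\phi=\{\tau\in\mathbb C:\phi\le|\arg\tau|\le\pi\}$.
   Context: Parameters: $\kappa>0$, $\gamma>1$, $c_v>0$, $R_g>0$ with $c_p=\gamma c_v=c_v+R_g$; $T_\infty>0$, $p_{\infty,*}>0$, $\sigma>0$, $\mu_l\ge0$, $\rho_l>0$; $\rho_*,R_*>0$ with $R_gT_\infty\rho_*=p_{\infty,*}+2\sigma/R_*$; $\bar\kappa=\kappa/(c_p\rho_*R_*^2)$. *)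

(* Defs.v *)
From Stdlib Require Export Reals.
From Coquelicot Require Export Coquelicot.

Definition Csum (a : nat -> C) : C :=
  (Series (fun n => Re (a n)), Series (fun n => Im (a n))).

(* Principal argument of z, in (-PI, PI] for z <> 0. *)
Definition Carg (z : C) : R :=
  if Rle_dec 0 (Im z) then acos (Re z / Cmod z) else - acos (Re z / Cmod z).

Definition kbar (kappa cp rhos Rs : R) : R := kappa / (cp * rhos * Rs ^ 2).

Definition Qterm (kb : R) (tau : C) (j : nat) : C :=
  Cdiv tau (Cmult (RtoC (INR j ^ 2))
                  (Cplus (RtoC (PI ^ 2 * kb * INR j ^ 2)) tau)).

(* Q(tau); the series is over j >= 1 *)
Definition Qfun (kb gamma Rg Tinf sigma mul rhol rhos Rs : R) (tau : C) : C :=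
  Cplus
    (Cmult (Cmult (RtoC (1 / (Rg * Tinf)))
                  (Cminus (RtoC (4 * PI / 3))
                          (Cmult (RtoC (8 * (gamma - 1) / (PI * gamma)))
                                 (Csum (fun n => Qterm kb tau (S n))))))
           (Cminus (Cplus (Cmult (RtoC (rhol * Rs)) (Cmult tau tau))
                          (Cmult (RtoC (4 * mul / Rs)) tau))
                   (RtoC (2 * sigma / Rs ^ 2))))
    (RtoC (4 * PI * rhos / Rs)).

Definition is_pole (kb : R) (tau : C) : Prop :=
  exists j : nat, (1 <= j)%nat /\ tau = RtoC (- (PI ^ 2 * kb * INR j ^ 2)).

Definition is_root_Q (kb gamma Rg Tinf sigma mul rhol rhos Rs : R) (tau : C) : Prop :=
  ~ is_pole kb tau /\ Qfun kb gamma Rg Tinf sigma mul rhol rhos Rs tau = RtoC 0.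

(* Main.v *)
Require Import Defs.
From Stdlib Require Import Lra Lia Psatz.
Open Scope R_scope.




Fixpoint ssum (F : nat -> R) (n : nat) : R :=
  match n with O => 0 | S n => ssum F n + F n end.

Lemma ssum_ext F G n : (forall k, (k < n)%nat -> F k = G k) -> ssum F n = ssum G n.
Proof. induction n; simpl; intros H; [reflexivity|]. rewrite IHn by (intros; apply H; lia). rewrite H by lia. reflexivity. Qed.

Lemma ssum_le F G n : (forall k, (k < n)%nat -> F k <= G k) -> ssum F n <= ssum G n.
Proof. induction n; simpl; intros H; [lra|]. assert (ssum F n <= ssum G n) by (apply IHn; intros; apply H; lia). assert (F n <= G n) by (apply H; lia). lra. Qed.

Lemma ssum_nonneg F n : (forall k, 0 <= F k) -> 0 <= ssum F n.
Proof. intros H; induction n; simpl; [lra|]. specialize (H n). lra. Qed.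

Lemma ssum_mono F n m : (forall k, 0 <= F k) -> (n <= m)%nat -> ssum F n <= ssum F m.
Proof. intros H Hle; induction Hle; simpl; [lra|]. specialize (H m). lra. Qed.

Lemma ssum_plus F G n : ssum (fun k => F k + G k) n = ssum F n + ssum G n.
Proof. induction n; simpl; [lra|]. rewrite IHn. lra. Qed.

Lemma ssum_scal c F n : ssum (fun k => c * F k) n = c * ssum F n.
Proof. induction n; simpl; [lra|]. rewrite IHn. lra. Qed.

Lemma ssum_eo F n : ssum F (2 * n) = ssum (fun k => F (2 * k)%nat + F (S (2 * k))) n.
Proof. induction n; [reflexivity|]. replace (2 * S n)%nat with (S (S (2 * n))) by lia.
  change (ssum F (S (S (2 * n)))) with (ssum F (2 * n) + F (2 * n)%nat + F (S (2 * n))).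
  rewrite IHn. simpl. lra. Qed.

Definition fsin (x : R) := 1 / (sin x) ^ 2.

Lemma fsin_double x : 0 < x < PI ->
  fsin x = (fsin (x / 2) + fsin ((PI - x) / 2)) / 4.
Proof.
  intros Hx. unfold fsin.
  assert (Hs : 0 < sin (x / 2)) by (apply sin_gt_0; lra).
  assert (Hc : sin ((PI - x) / 2) = cos (x / 2)).
  { replace ((PI - x) / 2) with (PI / 2 - x / 2) by field. apply sin_shift. }
  assert (Hc0 : 0 < cos (x / 2)) by (apply cos_gt_0; lra).
  rewrite Hc.
  replace x with (2 * (x / 2)) at 1 by field. rewrite sin_2a.
  pose proof (sin2_cos2 (x / 2)) as E. unfold Rsqr in E.
  field_simplify; try (split; lra). 
  rewrite <- E at 1. field. split; lra.
Qed.

Lemma fsin_ge x : 0 < x < PI -> 1 / x ^ 2 <= fsin x.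
Proof.
  intros Hx. unfold fsin. pose proof (sin_lt_x x ltac:(lra)).
  pose proof (sin_gt_0 x ltac:(lra) ltac:(lra)).
  apply Rmult_le_compat_l; [lra|]. apply Rinv_le_contravar; nra.
Qed.

Definition g1 x k := 1 / (x + INR k * PI) ^ 2.
Definition g2 x k := 1 / (INR (S k) * PI - x) ^ 2.

Lemma key n : forall x, 0 < x < PI -> ssum (g1 x) (2 ^ n) + ssum (g2 x) (2 ^ n) <= fsin x.
Proof.
  pose proof PI_RGT_0 as HPI.
  induction n; intros x Hx.
  - simpl. rewrite fsin_double by lra.
    pose proof (fsin_ge (x/2) ltac:(lra)). pose proof (fsin_ge ((PI - x)/2) ltac:(lra)).
    unfold g1, g2. simpl.
    replace (1 / ((x + 0 * PI) * ((x + 0 * PI) * 1))) with (1/(x/2)^2/4) by (field; lra).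
    replace (1 / ((1 * PI - x) * ((1 * PI - x) * 1))) with (1/((PI - x)/2)^2/4) by (field; lra).
    lra.
  - rewrite fsin_double by lra.
    pose proof (IHn (x/2) ltac:(lra)). pose proof (IHn ((PI - x)/2) ltac:(lra)).
    replace (2 ^ S n)%nat with (2 * 2 ^ n)%nat by (simpl; lia).
    rewrite !ssum_eo.
    assert (E1 : ssum (fun k => g1 x (2 * k)%nat + g1 x (S (2 * k))) (2 ^ n)
       = (ssum (g1 (x/2)) (2^n) + ssum (g2 ((PI - x)/2)) (2^n)) / 4).
    { unfold Rdiv at 1. rewrite Rmult_comm, <- ssum_plus, <- ssum_scal. apply ssum_ext. intros k _.
      unfold g1, g2. rewrite !S_INR, !mult_INR. simpl. pose proof (pos_INR k).
      field. split; nra. }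
    assert (E2 : ssum (fun k => g2 x (2 * k)%nat + g2 x (S (2 * k))) (2 ^ n)
       = (ssum (g2 (x/2)) (2^n) + ssum (g1 ((PI - x)/2)) (2^n)) / 4).
    { unfold Rdiv at 1. rewrite Rmult_comm, <- ssum_plus, <- ssum_scal. apply ssum_ext. intros k _.
      unfold g1, g2. rewrite !S_INR, !mult_INR. simpl. pose proof (pos_INR k).
      field. split; nra. }
    rewrite E1, E2. lra.
Qed.

Lemma odd_bound N : ssum (fun k => 1 / (2 * INR k + 1) ^ 2) N <= PI ^ 2 / 8.
Proof.
  pose proof PI_RGT_0 as HPI.
  assert (Hnn : forall k, 0 <= 1 / (2 * INR k + 1) ^ 2).
  { intros k. pose proof (pos_INR k). apply Rlt_le, Rdiv_lt_0_compat; [lra|]. nra. }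
  apply Rle_trans with (ssum (fun k => 1 / (2 * INR k + 1) ^ 2) (2 ^ N)).
  { apply ssum_mono; auto. apply Nat.lt_le_incl, Nat.pow_gt_lin_r. lia. }
  pose proof (key N (PI/2) ltac:(lra)) as H.
  unfold fsin in H. rewrite sin_PI2 in H.
  assert (E : forall k, g1 (PI/2) k = 4 / PI^2 * (1 / (2 * INR k + 1) ^ 2)).
  { intros k. unfold g1. pose proof (pos_INR k). field. split; nra. }
  assert (E' : forall k, g2 (PI/2) k = 4 / PI^2 * (1 / (2 * INR k + 1) ^ 2)).
  { intros k. unfold g2. rewrite S_INR. pose proof (pos_INR k). field. split; nra. }
  rewrite (ssum_ext _ _ _ (fun k _ => E k)), (ssum_ext _ _ _ (fun k _ => E' k)) in H.
  rewrite ssum_scal in H.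
  set (S0 := ssum _ _) in *.
  assert (0 < PI ^ 2) by nra.
  apply Rmult_le_reg_l with (8 / PI ^ 2). { apply Rdiv_lt_0_compat; lra. }
  replace (8 / PI ^ 2 * (PI ^ 2 / 8)) with 1 by (field; lra).
  replace (8 / PI ^ 2 * S0) with (4 / PI ^ 2 * S0 + 4 / PI ^ 2 * S0) by (field; lra).
  replace (1 / 1 ^ 2) with 1 in H by field. lra.
Qed.

Definition zt (n : nat) := 1 / INR (S n) ^ 2.

Lemma zt_nonneg k : 0 <= zt k.
Proof. unfold zt. pose proof (pos_INR k). rewrite S_INR. apply Rlt_le, Rdiv_lt_0_compat; [lra|]. nra. Qed.

Lemma zeta_bound N : ssum zt N <= PI ^ 2 / 6.
Proof.
  apply Rle_trans with (ssum zt (2 * N)).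
  { apply ssum_mono; [apply zt_nonneg|lia]. }
  assert (E : ssum zt (2 * N) = ssum (fun k => 1 / (2 * INR k + 1) ^ 2) N + ssum zt N / 4).
  { rewrite ssum_eo. unfold Rdiv at 2. rewrite Rmult_comm, <- ssum_scal, <- ssum_plus.
    apply ssum_ext. intros k _. unfold zt. rewrite !S_INR, !mult_INR. simpl. pose proof (pos_INR k).
    field. split; nra. }
  pose proof (odd_bound N). pose proof (ssum_mono zt N (2 * N) zt_nonneg ltac:(lia)). lra.
Qed.

Lemma sum_n_ssum (a : nat -> R) N : sum_n a N = ssum a (S N).
Proof. induction N. - rewrite sum_O. simpl. lra. - rewrite sum_Sn, IHN. simpl. unfold plus. simpl. lra. Qed.

Lemma ex_series_zt : ex_series zt.
Proof.
  assert (H : ex_finite_lim_seq (sum_n zt)).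
  { apply ex_finite_lim_seq_incr with (PI ^ 2 / 6).
    - intros n. rewrite !sum_n_ssum. simpl. pose proof (zt_nonneg (S n)). simpl in *. lra.
    - intros n. rewrite sum_n_ssum. apply zeta_bound. }
  destruct H as [l Hl]. exists l. exact Hl.
Qed.

Lemma Series_zt : Series zt <= PI ^ 2 / 6.
Proof.
  pose proof (Series_correct _ ex_series_zt) as H.
  assert (H2 : Rbar_le (Series zt) (PI ^ 2 / 6)).
  { apply (is_lim_seq_le (sum_n zt) (fun _ => PI ^ 2 / 6)).
    - intros n. rewrite sum_n_ssum. apply zeta_bound.
    - exact H.
    - apply is_lim_seq_const. }
  exact H2.
Qed.
Lemma ex_series_R_le (r b : nat -> R) : (forall n, 0 <= r n <= b n) -> ex_series b -> ex_series r.
Proof. intros H Hb. apply (ex_series_le r b); auto. intros n. unfold norm; simpl. unfold abs; simpl.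
  rewrite Rabs_pos_eq; apply H. Qed.
Lemma Series_zero (r : nat -> R) : Series (fun _ => 0) = 0.
Proof. rewrite (Series_ext _ (fun n => 0 * 0)) by (intros; ring). rewrite Series_scal_l. ring. Qed.
Lemma Series_nonneg (r : nat -> R) : (forall n, 0 <= r n) -> ex_series r -> 0 <= Series r.
Proof. intros H Hr. rewrite <- (Series_zero r). apply Series_le; auto. intros; split; [lra|auto]. Qed.
Lemma ex_series_scalR (c : R) (b : nat -> R) : ex_series b -> ex_series (fun n => c * b n).
Proof. intros H. apply (ex_series_scal_l c b H). Qed.

Lemma Qterm_parts kb x y n :
  let J := INR (S n) in let a := PI ^ 2 * kb in
  let D := (a * J ^ 2 + x) ^ 2 + y ^ 2 in D <> 0 ->
  Re (Qterm kb (x, y) (S n)) = (x * (a * J ^ 2 + x) + y ^ 2) / (J ^ 2 * D) /\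
  Im (Qterm kb (x, y) (S n)) = a * y / D.
Proof.
  intros J a D HD. assert (HJ : J <> 0) by (unfold J; apply not_0_INR; lia).
  unfold Qterm, Cdiv, Cmult, Cinv, Cplus, RtoC, Re, Im; cbn [fst snd].
  fold J. unfold D, a in *; clearbody J; clear D a.
  assert (E : forall A, (J ^ 2 * A) ^ 2 + (J ^ 2 * y) ^ 2 = J ^ 4 * (A ^ 2 + y ^ 2)) by (intros; ring).
  assert (J ^ 4 <> 0) by (apply pow_nonzero; auto).
  split; field; repeat split; auto; rewrite E; apply Rmult_integral_contrapositive; split; auto.
Qed.

Lemma Qfun_parts kb gamma Rg Tinf sigma mul rhol rhos Rs x y :
  Rs <> 0 -> gamma <> 0 -> Tinf <> 0 -> Rg <> 0 ->
  let SR := Series (fun n => Re (Qterm kb (x, y) (S n))) in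
  let SI := Series (fun n => Im (Qterm kb (x, y) (S n))) in
  let c := 8 * (gamma - 1) / (PI * gamma) in
  let P := 4 * PI / 3 - c * SR in
  let I := - (c * SI) in
  let g := 1 / (Rg * Tinf) in
  let Br := rhol * Rs * (x ^ 2 - y ^ 2) + 4 * mul / Rs * x - 2 * sigma / Rs ^ 2 in
  let L := 2 * (rhol * Rs) * x + 4 * mul / Rs in
  Re (Qfun kb gamma Rg Tinf sigma mul rhol rhos Rs (x, y)) = g * (P * Br - I * (y * L)) + 4 * PI * rhos / Rs /\
  Im (Qfun kb gamma Rg Tinf sigma mul rhol rhos Rs (x, y)) = g * (P * (y * L) + I * Br).
Proof.
  intros H1 H2 H3 H4 SR SI c P I g Br L. unfold Qfun.
  change (Csum (fun n => Qterm kb (x, y) (S n))) with (SR, SI).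
  clearbody SR SI. unfold P, I, g, Br, L, c.
  unfold Cminus, Cplus, Cmult, Copp, RtoC, Re, Im; cbn [fst snd]. pose proof PI_RGT_0.
  split; field; repeat split; auto; lra.
Qed.

Lemma acos_mono u v : -1 <= u -> u <= v -> v <= 1 -> acos v <= acos u.
Proof.
  intros H1 H2 H3. destruct (Rle_or_lt (acos v) (acos u)) as [H|H]; auto.
  pose proof (acos_bound u). pose proof (acos_bound v).
  pose proof (cos_decreasing_1 (acos u) (acos v) ltac:(lra) ltac:(lra) ltac:(lra) ltac:(lra) H) as Hc.
  rewrite !cos_acos in Hc by lra. lra.
Qed.
Lemma poly_bound u a : 0 <= u -> u * (a ^ 2 + u) ^ 2 <= (a ^ 2 + 1) ^ 2 * (1 + u ^ 4).
Proof.
  intros Hu.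
  assert (H : forall k : R, k = u \/ k = u ^ 2 \/ k = u ^ 3 -> k <= 1 + u ^ 4).
  { intros k Hk. destruct (Rle_or_lt u 1).
    - assert (u ^ 2 <= 1) by nra. assert (u ^ 3 <= 1) by nra. assert (0 <= u ^ 4) by (apply pow_le; lra).
      destruct Hk as [->|[->| ->]]; lra.
    - assert (u <= u ^ 2) by nra. assert (1 <= u ^ 2) by nra.
      assert (u ^ 2 <= u ^ 4) by (replace (u ^ 4) with (u ^ 2 * u ^ 2) by ring; nra).
      assert (0 <= u ^ 3) by (apply pow_le; lra).
      assert (u ^ 3 <= u ^ 4) by (replace (u ^ 4) with (u ^ 3 * u) by ring; nra).
      destruct Hk as [->|[->| ->]]; lra. }
  pose proof (H u (or_introl eq_refl)). pose proof (H (u ^ 2) (or_intror (or_introl eq_refl))).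
  pose proof (H (u ^ 3) (or_intror (or_intror eq_refl))).
  assert (0 <= a ^ 2) by apply pow2_ge_0. assert (0 <= a ^ 4) by (replace (a ^ 4) with ((a ^ 2) ^ 2) by ring; apply pow2_ge_0).
  replace (u * (a ^ 2 + u) ^ 2) with (a ^ 4 * u + 2 * a ^ 2 * u ^ 2 + u ^ 3) by ring.
  replace ((a ^ 2 + 1) ^ 2 * (1 + u ^ 4)) with (a ^ 4 * (1 + u ^ 4) + 2 * a ^ 2 * (1 + u ^ 4) + (1 + u ^ 4)) by ring.
  assert (a ^ 4 * u <= a ^ 4 * (1 + u ^ 4)) by (apply Rmult_le_compat_l; lra).
  assert (2 * a ^ 2 * u ^ 2 <= 2 * a ^ 2 * (1 + u ^ 4)) by (apply Rmult_le_compat_l; lra).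
  lra.
Qed.

Lemma quart_bound q b : 0 <= q -> 0 <= b -> q ^ 4 + b ^ 4 <= (q + b) ^ 4.
Proof.
  intros Hq Hb.
  assert (0 <= q ^ 3 * b) by (apply Rmult_le_pos; [apply pow_le|]; lra).
  assert (0 <= q ^ 2 * b ^ 2) by (apply Rmult_le_pos; apply pow_le; lra).
  assert (0 <= q * b ^ 3) by (apply Rmult_le_pos; [|apply pow_le]; lra).
  replace ((q + b) ^ 4) with (q ^ 4 + b ^ 4 + 4 * (q ^ 3 * b) + 6 * (q ^ 2 * b ^ 2) + 4 * (q * b ^ 3)) by ring.
  lra.
Qed.

Lemma tail_ineq a c rr K2 q m0 S2 X u Br nL D0 W :
  0 < a -> 0 < c -> 0 < rr -> 0 < K2 -> 0 < q -> m0 <= q ^ 4 -> m0 <= rr ^ 4 / 4 ->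
  0 <= X -> 0 <= u -> X ^ 2 <= S2 * u -> 0 <= S2 ->
  0 < D0 -> D0 <= 2 * a ^ 2 + 2 * u -> 1 / D0 <= W ->
  (q + 7 / 8 * rr * u) ^ 2 <= Br ^ 2 ->
  0 <= nL -> nL <= 2 * rr * X ->
  c * a * W * Br ^ 2 <= nL * K2 ->
  c ^ 2 * a ^ 2 * m0 <= 16 * rr ^ 2 * K2 ^ 2 * S2 * (a ^ 2 + 1) ^ 2.
Proof.
  intros Ha Hc Hrr HK2 Hq Hm1 Hm2 HX Hu HX2 HS2 HD0 HD0b HW HBr2 HnL HnLX Hk.
  assert (Hca : 0 < c * a) by (apply Rmult_lt_0_compat; lra).
  assert (HB0 : 0 <= Br ^ 2) by apply pow2_ge_0.
  assert (S1 : c * a * Br ^ 2 <= nL * K2 * D0).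
  { assert (c * a * (Br ^ 2 / D0) <= c * a * W * Br ^ 2).
    { replace (c * a * W * Br ^ 2) with (c * a * (W * Br ^ 2)) by ring.
      apply Rmult_le_compat_l; [lra|].
      replace (Br ^ 2 / D0) with (1 / D0 * Br ^ 2) by (field; lra).
      apply Rmult_le_compat_r; lra. }
    assert (c * a * (Br ^ 2 / D0) * D0 <= nL * K2 * D0) by (apply Rmult_le_compat_r; lra).
    replace (c * a * (Br ^ 2 / D0) * D0) with (c * a * Br ^ 2) in H0 by (field; lra). lra. }
  assert (S4 : c * a * (q + 7 / 8 * rr * u) ^ 2 <= 4 * rr * K2 * X * (a ^ 2 + u)).
  { assert (nL * K2 * D0 <= (2 * rr * X) * K2 * (2 * a ^ 2 + 2 * u)).
    { apply Rmult_le_compat. apply Rmult_le_pos; lra. lra. apply Rmult_le_compat_r; lra. lra. }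
    assert (c * a * (q + 7 / 8 * rr * u) ^ 2 <= c * a * Br ^ 2) by (apply Rmult_le_compat_l; lra).
    replace (4 * rr * K2 * X * (a ^ 2 + u)) with ((2 * rr * X) * K2 * (2 * a ^ 2 + 2 * u) / 1) by field.
    lra. }
  assert (HT1 : 0 <= c * a * (q + 7 / 8 * rr * u) ^ 2).
  { apply Rmult_le_pos; [lra| apply pow2_ge_0]. }
  assert (S5 : (c * a * (q + 7 / 8 * rr * u) ^ 2) ^ 2 <= (4 * rr * K2 * X * (a ^ 2 + u)) ^ 2)
    by (apply pow_incr; lra).
  assert (S6 : (4 * rr * K2 * X * (a ^ 2 + u)) ^ 2 <= 16 * rr ^ 2 * K2 ^ 2 * S2 * (u * (a ^ 2 + u) ^ 2)).
  { replace ((4 * rr * K2 * X * (a ^ 2 + u)) ^ 2) with ((16 * rr ^ 2 * K2 ^ 2 * (a ^ 2 + u) ^ 2) * X ^ 2) by ring.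
    replace (16 * rr ^ 2 * K2 ^ 2 * S2 * (u * (a ^ 2 + u) ^ 2)) with ((16 * rr ^ 2 * K2 ^ 2 * (a ^ 2 + u) ^ 2) * (S2 * u)) by ring.
    apply Rmult_le_compat_l; [|lra].
    assert (0 <= rr ^ 2) by apply pow2_ge_0. assert (0 <= K2 ^ 2) by apply pow2_ge_0.
    assert (0 <= (a ^ 2 + u) ^ 2) by apply pow2_ge_0.
    apply Rmult_le_pos; [|lra]. apply Rmult_le_pos; [|lra]. lra. }
  assert (S7 : m0 * (1 + u ^ 4) <= (q + 7 / 8 * rr * u) ^ 4).
  { assert (0 <= 7 / 8 * rr * u) by (apply Rmult_le_pos; lra).
    pose proof (quart_bound q (7 / 8 * rr * u) ltac:(lra) H).
    assert (E : (7 / 8 * rr * u) ^ 4 = (7/8) ^ 4 * (rr ^ 4 * u ^ 4)) by ring.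
    assert (0 <= u ^ 4) by (apply pow_le; lra).
    assert (m0 * u ^ 4 <= rr ^ 4 / 4 * u ^ 4) by (apply Rmult_le_compat_r; lra).
    assert (0 <= rr ^ 4 * u ^ 4) by (apply Rmult_le_pos; apply pow_le; lra).
    lra. }
  pose proof (poly_bound u a Hu) as S8.
  assert (H1u : 0 < 1 + u ^ 4) by (assert (0 <= u ^ 4) by (apply pow_le; lra); lra).
  assert (HK : 0 <= 16 * rr ^ 2 * K2 ^ 2 * S2).
  { assert (0 <= rr ^ 2) by apply pow2_ge_0. assert (0 <= K2 ^ 2) by apply pow2_ge_0.
    apply Rmult_le_pos; [|lra]. apply Rmult_le_pos; [|lra]. lra. }
  assert (S9 : c ^ 2 * a ^ 2 * m0 * (1 + u ^ 4) <= 16 * rr ^ 2 * K2 ^ 2 * S2 * (a ^ 2 + 1) ^ 2 * (1 + u ^ 4)).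
  { assert (E : (c * a * (q + 7 / 8 * rr * u) ^ 2) ^ 2 = c ^ 2 * a ^ 2 * (q + 7 / 8 * rr * u) ^ 4) by ring.
    assert (0 < c ^ 2 * a ^ 2) by (apply Rmult_lt_0_compat; apply pow_lt; lra).
    assert (c ^ 2 * a ^ 2 * (m0 * (1 + u ^ 4)) <= c ^ 2 * a ^ 2 * (q + 7 / 8 * rr * u) ^ 4) by (apply Rmult_le_compat_l; lra).
    assert (16 * rr ^ 2 * K2 ^ 2 * S2 * (u * (a ^ 2 + u) ^ 2) <= 16 * rr ^ 2 * K2 ^ 2 * S2 * ((a ^ 2 + 1) ^ 2 * (1 + u ^ 4)))
      by (apply Rmult_le_compat_l; lra).
    replace (c ^ 2 * a ^ 2 * m0 * (1 + u ^ 4)) with (c ^ 2 * a ^ 2 * (m0 * (1 + u ^ 4))) by ring.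
    replace (16 * rr ^ 2 * K2 ^ 2 * S2 * (a ^ 2 + 1) ^ 2 * (1 + u ^ 4)) with (16 * rr ^ 2 * K2 ^ 2 * S2 * ((a ^ 2 + 1) ^ 2 * (1 + u ^ 4))) by ring.
    lra. }
  apply Rmult_le_reg_r with (1 + u ^ 4); auto.
Qed.

Lemma Rabs_Carg z : Rabs (Carg z) = acos (Re z / Cmod z).
Proof.
  unfold Carg. pose proof (acos_bound (Re z / Cmod z)).
  destruct (Rle_dec 0 (Im z)).
  - apply Rabs_pos_eq; lra.
  - rewrite Rabs_Ropp. apply Rabs_pos_eq; lra.
Qed.

Lemma Qterm_parts2 kb a x y n : a = PI ^ 2 * kb ->
  (a * INR (S n) ^ 2 + x) ^ 2 + y ^ 2 <> 0 ->
  Re (Qterm kb (x, y) (S n)) = (x * (a * INR (S n) ^ 2 + x) + y ^ 2) / (INR (S n) ^ 2 * ((a * INR (S n) ^ 2 + x) ^ 2 + y ^ 2)) /\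
  Im (Qterm kb (x, y) (S n)) = a * y / ((a * INR (S n) ^ 2 + x) ^ 2 + y ^ 2).
Proof. intros ->. apply Qterm_parts. Qed.

Theorem lemmaB2
  (kappa gamma cv Rg cp Tinf pinf sigma mul rhol rhos Rs : R)
  (Hkappa : 0 < kappa) (Hgamma : 1 < gamma) (Hcv : 0 < cv) (HRg : 0 < Rg)
  (Hcp1 : cp = gamma * cv) (Hcp2 : cp = cv + Rg)
  (HT : 0 < Tinf) (Hp : 0 < pinf) (Hsigma : 0 < sigma) (Hmul : 0 <= mul)
  (Hrhol : 0 < rhol) (Hrhos : 0 < rhos) (HRs : 0 < Rs)
  (Heq : Rg * Tinf * rhos = pinf + 2 * sigma / Rs) :
  exists phi : R, PI / 2 < phi < PI /\
    forall tau : C,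
      is_root_Q (kbar kappa cp rhos Rs) gamma Rg Tinf sigma mul rhol rhos Rs tau ->
      phi <= Rabs (Carg tau) <= PI.
Proof.
  pose proof PI_RGT_0 as HPI.
  set (kb := kbar kappa cp rhos Rs).
  assert (Hcp : 0 < cp) by (rewrite Hcp2; lra).
  assert (Hkb : 0 < kb).
  { unfold kb, kbar. apply Rdiv_lt_0_compat; [lra|]. apply Rmult_lt_0_compat; [nra|]. apply pow_lt; lra. }
  set (a := PI ^ 2 * kb).
  assert (Ha : 0 < a) by (unfold a; apply Rmult_lt_0_compat; [apply pow_lt|]; lra).
  set (c := 8 * (gamma - 1) / (PI * gamma)).
  assert (Hc : 0 < c) by (unfold c; apply Rdiv_lt_0_compat; nra).
  set (g := 1 / (Rg * Tinf)).
  assert (Hg : 0 < g) by (unfold g; apply Rdiv_lt_0_compat; nra).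
  set (K1 := 4 * PI * rhos / Rs).
  assert (HK1 : 0 < K1) by (unfold K1; apply Rdiv_lt_0_compat; nra).
  set (K2 := K1 / g).
  assert (HK2 : 0 < K2) by (unfold K2; apply Rdiv_lt_0_compat; nra).
  set (q := 2 * sigma / Rs ^ 2).
  assert (Hq : 0 < q) by (unfold q; apply Rdiv_lt_0_compat; [lra|]; apply pow_lt; lra).
  set (rr := rhol * Rs).
  assert (Hrr : 0 < rr) by (unfold rr; nra).
  set (m := 4 * mul / Rs).
  assert (Hm : 0 <= m) by (unfold m; apply Rmult_le_pos; [lra|]; apply Rlt_le, Rinv_0_lt_compat; lra).
  set (m0 := Rmin (q ^ 4) (rr ^ 4 / 4)).
  assert (Hm0 : 0 < m0).
  { unfold m0. apply Rmin_glb_lt; [apply pow_lt; lra|]. assert (0 < rr ^ 4) by (apply pow_lt; lra). lra. }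
  set (Mval := c ^ 2 * a ^ 2 * m0 / (16 * rr ^ 2 * K2 ^ 2 * (a ^ 2 + 1) ^ 2)).
  assert (HM : 0 < Mval).
  { unfold Mval. apply Rdiv_lt_0_compat.
    - apply Rmult_lt_0_compat; [|lra]. apply Rmult_lt_0_compat; apply pow_lt; lra.
    - assert (0 < rr ^ 2) by (apply pow_lt; lra). assert (0 < K2 ^ 2) by (apply pow_lt; lra).
      assert (0 < (a ^ 2 + 1) ^ 2) by (apply pow_lt; nra).
      apply Rmult_lt_0_compat; [|lra]. apply Rmult_lt_0_compat; [|lra]. lra. }
  set (s0 := Rmin (1 / 4) (Mval / 2)).
  assert (Hs0 : 0 < s0 <= 1 / 4).
  { unfold s0. split; [apply Rmin_glb_lt; lra | apply Rmin_l]. }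
  assert (HS2 : 2 * s0 ^ 2 < Mval).
  { unfold s0, Rmin. destruct (Rle_dec (1/4) (Mval/2)); nra. }
  exists (acos (- s0)).
  split.
  { rewrite acos_opp. pose proof (acos_bound_lt s0 ltac:(lra)).
    assert (acos s0 <= acos 0) by (apply acos_mono; lra).
    rewrite acos_0 in H0.
    assert (acos s0 <> PI / 2).
    { intro E. assert (cos (acos s0) = cos (PI / 2)) by (rewrite E; reflexivity).
      rewrite cos_acos, cos_PI2 in H1 by lra. lra. }
    lra. }
  intros [x y] [_ HQ].
  rewrite Rabs_Carg. change (Re (x, y)) with x.
  assert (Ht : Cmod (x, y) = sqrt (x ^ 2 + y ^ 2)) by reflexivity.
  rewrite Ht. set (t := sqrt (x ^ 2 + y ^ 2)).
  assert (Ht0 : 0 <= t) by apply sqrt_pos.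
  assert (Ht2 : t ^ 2 = x ^ 2 + y ^ 2) by (apply pow2_sqrt; nra).
  pose proof (acos_bound (x / t)) as Hab.
  split; [|lra].
  destruct (Qfun_parts kb gamma Rg Tinf sigma mul rhol rhos Rs x y ltac:(lra) ltac:(lra) ltac:(lra) ltac:(lra)) as [HRe HIm].
  cbv zeta in HRe, HIm.
  remember (Series (fun n => Re (Qterm kb (x, y) (S n)))) as SR eqn:HSR.
  remember (Series (fun n => Im (Qterm kb (x, y) (S n)))) as SI eqn:HSI.
  fold c g q m K1 rr in HRe, HIm.
  set (P := 4 * PI / 3 - c * SR) in *.
  set (I := - (c * SI)) in *.
  set (Br := rr * (x ^ 2 - y ^ 2) + m * x - q) in *.
  set (L := 2 * rr * x + m) in *.
  assert (E1 := f_equal Re HQ). assert (E2 := f_equal Im HQ).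
  rewrite HRe in E1. rewrite HIm in E2. cbn [Re Im RtoC fst snd] in E1, E2.
  assert (Hxt : -1 <= x / t).
  { destruct (Req_dec t 0) as [Ht00|Ht00].
    - rewrite Ht00. unfold Rdiv. rewrite Rinv_0. lra.
    - assert (0 < t) by lra. apply Rmult_le_reg_r with t; auto.
      unfold Rdiv. rewrite Rmult_assoc, Rinv_l by lra. nra. }
  destruct (Req_dec y 0) as [Hy|Hy].
  -
    subst y. destruct (Rlt_or_le x 0) as [Hx|Hx].
    + assert (Htx : t = - x).
      { unfold t. replace (x ^ 2 + 0 ^ 2) with ((- x) ^ 2) by ring. apply sqrt_pow2. lra. }
      rewrite Htx. replace (x / - x) with (-1) by (field; lra).
      apply acos_mono; lra.
    + exfalso.
      assert (HD : forall n, 0 < (a * INR (S n) ^ 2 + x) ^ 2 + 0 ^ 2).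
      { intros n. assert (0 < INR (S n)) by (apply lt_0_INR; lia).
        assert (0 < a * INR (S n) ^ 2) by (apply Rmult_lt_0_compat; [lra| apply pow_lt; lra]). nra. }
      assert (HSI0 : SI = 0).
      { rewrite HSI. rewrite (Series_ext _ (fun _ => 0)). apply (Series_zero (fun _ => 0)).
        intros n. destruct (Qterm_parts2 kb a x 0 n eq_refl ltac:(specialize (HD n); lra)) as [_ H2].
        rewrite H2. unfold Rdiv. ring. }
      assert (Hterm : forall n, 0 <= Re (Qterm kb (x, 0) (S n)) <= zt n).
      { intros n. destruct (Qterm_parts2 kb a x 0 n eq_refl ltac:(specialize (HD n); lra)) as [H1 _].
        rewrite H1. unfold zt. set (J := INR (S n)).
        assert (0 < J) by (apply lt_0_INR; lia).
        assert (0 < a * J ^ 2) by (apply Rmult_lt_0_compat; [lra| apply pow_lt; lra]).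
        replace ((x * (a * J ^ 2 + x) + 0 ^ 2) / (J ^ 2 * ((a * J ^ 2 + x) ^ 2 + 0 ^ 2)))
          with (x / (a * J ^ 2 + x) * (1 / J ^ 2)) by (field; split; lra).
        assert (0 < 1 / J ^ 2) by (apply Rdiv_lt_0_compat; [lra| apply pow_lt; lra]).
        assert (0 <= x / (a * J ^ 2 + x) <= 1).
        { split. apply Rdiv_le_0_compat; lra.
          apply Rmult_le_reg_r with (a * J ^ 2 + x); [lra|]. unfold Rdiv. rewrite Rmult_assoc, Rinv_l by lra. lra. }
        split; [apply Rmult_le_pos; lra|]. nra. }
      assert (HSRb : 0 <= SR <= PI ^ 2 / 6).
      { rewrite HSR. split.
        - apply Series_nonneg. intros n; apply Hterm. apply (ex_series_R_le _ zt); auto. exact ex_series_zt.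
        - eapply Rle_trans; [apply Series_le; auto; exact ex_series_zt| apply Series_zt]. }
      assert (HcP : c * (PI ^ 2 / 6) <= 4 * PI / 3).
      { unfold c. replace (8 * (gamma - 1) / (PI * gamma) * (PI ^ 2 / 6)) with (4 * PI / 3 * ((gamma - 1) / gamma)) by (field; lra).
        assert ((gamma - 1) / gamma <= 1).
        { apply Rmult_le_reg_r with gamma; [lra|]. unfold Rdiv. rewrite Rmult_assoc, Rinv_l by lra. lra. }
        assert (0 < 4 * PI / 3) by lra. nra. }
      assert (HP : 0 <= P <= 4 * PI / 3) by (unfold P; nra).
      assert (HI0 : I = 0) by (unfold I; rewrite HSI0; ring).
      rewrite HI0 in E1.
      assert (HKq : g * (4 * PI / 3) * q < K1).
      { assert (E : K1 * (Rg * Tinf) = 4 * PI / Rs * (Rg * Tinf * rhos)) by (unfold K1; field; lra).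
        rewrite Heq in E.
        assert (E' : g * (4 * PI / 3) * q * (Rg * Tinf) = 4 * PI / 3 * (2 * sigma / Rs ^ 2)) by (unfold g, q; field; lra).
        apply Rmult_lt_reg_r with (Rg * Tinf); [nra|]. rewrite E, E'. unfold q.
        replace (4 * PI / 3 * (2 * sigma / Rs ^ 2)) with (4 * PI / Rs * (1 / 3 * (2 * sigma / Rs))) by (field; lra).
        apply Rmult_lt_compat_l. apply Rdiv_lt_0_compat; lra.
        assert (0 < 2 * sigma / Rs) by (apply Rdiv_lt_0_compat; lra). lra. }
      assert (HBr : - q <= Br) by (unfold Br; assert (0 <= x ^ 2) by nra; nra).
      destruct (Rle_or_lt 0 Br) as [HB|HB].
      * assert (0 <= g * (P * Br)) by (apply Rmult_le_pos; [lra| apply Rmult_le_pos; lra]). nra.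
      * assert (P * Br >= 4 * PI / 3 * Br) by nra.
        assert (4 * PI / 3 * Br >= - (4 * PI / 3 * q)) by nra.
        assert (g * (P * Br) >= - (g * (4 * PI / 3) * q)) by nra.
        nra.
  - assert (Hy2 : 0 < y ^ 2) by (assert (y * y > 0) by (apply Rsqr_pos_lt; auto); nra).
    set (Dn := fun n => (a * INR (S n) ^ 2 + x) ^ 2 + y ^ 2).
    assert (HD : forall n, 0 < Dn n).
    { intros n; unfold Dn. assert (0 <= (a * INR (S n) ^ 2 + x) ^ 2) by (apply pow2_ge_0). lra. }
    set (kap := Rmin (a ^ 2 / 4) (a * y ^ 2 / (2 * Rabs x + 1))).
    assert (Hkap : 0 < kap).
    { unfold kap. apply Rmin_glb_lt. nra. apply Rdiv_lt_0_compat. nra. pose proof (Rabs_pos x). lra. }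
    assert (HkapD : forall n, kap * INR (S n) ^ 2 <= Dn n).
    { intros n. unfold Dn. set (J := INR (S n)).
      assert (HJ1 : 1 <= J) by (unfold J; rewrite S_INR; pose proof (pos_INR n); lra).
      pose proof (Rle_abs x). pose proof (Rle_abs (- x)). rewrite Rabs_Ropp in H0.
      destruct (Rle_or_lt (2 * Rabs x) (a * J ^ 2)) as [Hc1|Hc1].
      - assert (kap <= a ^ 2 / 4) by apply Rmin_l.
        assert (a * J ^ 2 / 2 <= a * J ^ 2 + x) by lra.
        assert (0 <= a * J ^ 2 / 2) by nra.
        assert ((a * J ^ 2 / 2) ^ 2 <= (a * J ^ 2 + x) ^ 2) by (apply pow_incr; lra).
        assert (HJ2 : 1 <= J ^ 2) by nra.
        assert (J ^ 2 <= J ^ 4) by (replace (J ^ 4) with (J ^ 2 * J ^ 2) by ring; nra).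
        assert (a ^ 2 / 4 * J ^ 2 <= (a * J ^ 2 / 2) ^ 2) by nra.
        assert (0 <= J ^ 2) by nra.
        nra.
      - assert (kap <= a * y ^ 2 / (2 * Rabs x + 1)) by apply Rmin_r.
        assert (HR : 0 < 2 * Rabs x + 1) by (pose proof (Rabs_pos x); lra).
        assert (a * y ^ 2 / (2 * Rabs x + 1) * J ^ 2 <= y ^ 2).
        { replace (a * y ^ 2 / (2 * Rabs x + 1) * J ^ 2) with (y ^ 2 * ((a * J ^ 2) / (2 * Rabs x + 1))) by (field; lra).
          assert (a * J ^ 2 / (2 * Rabs x + 1) <= 1).
          { apply Rmult_le_reg_r with (2 * Rabs x + 1); auto. unfold Rdiv. rewrite Rmult_assoc, Rinv_l by lra. lra. }
          nra. }
        assert (0 <= J ^ 2) by nra.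
        assert (kap * J ^ 2 <= a * y ^ 2 / (2 * Rabs x + 1) * J ^ 2) by (apply Rmult_le_compat_r; lra).
        assert (0 <= (a * J ^ 2 + x) ^ 2) by apply pow2_ge_0. lra. }
    assert (Hconv : ex_series (fun n => 1 / Dn n)).
    { apply (ex_series_R_le _ (fun n => / kap * zt n)).
      - intros n. split. apply Rlt_le, Rdiv_lt_0_compat; [lra|apply HD].
        unfold zt. assert (0 < INR (S n) ^ 2) by (apply pow_lt, lt_0_INR; lia).
        assert (INR (S n) <> 0) by (apply not_0_INR; lia). assert (kap <> 0) by lra.
        replace (/ kap * (1 / INR (S n) ^ 2)) with (1 / (kap * INR (S n) ^ 2)) by (field; auto).
        unfold Rdiv. rewrite !Rmult_1_l. apply Rinv_le_contravar; [nra| apply HkapD].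
      - apply ex_series_scalR, ex_series_zt. }
    set (W := Series (fun n => 1 / Dn n)).
    assert (HW : 1 / Dn 0%nat <= W).
    { unfold W. rewrite Series_incr_1 by exact Hconv.
      assert (0 <= Series (fun k => 1 / Dn (S k))).
      { apply Series_nonneg. intros n. apply Rlt_le, Rdiv_lt_0_compat; [lra|apply HD].
        apply (ex_series_incr_1 (fun n => 1 / Dn n)). exact Hconv. }
      lra. }
    assert (HD0 : Dn 0%nat = (a + x) ^ 2 + y ^ 2) by (unfold Dn; simpl; ring).
    assert (HSIW : SI = a * y * W).
    { rewrite HSI. unfold W. rewrite <- Series_scal_l. apply Series_ext. intros n.
      destruct (Qterm_parts2 kb a x y n eq_refl ltac:(specialize (HD n); unfold Dn in HD; lra)) as [_ H2].
      rewrite H2. unfold Dn. field. specialize (HD n). unfold Dn in HD. lra. }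
    assert (e1 : P * Br - I * (y * L) = - K2).
    { unfold K2. apply Rmult_eq_reg_l with g; [|lra]. field_simplify; lra. }
    assert (e2 : P * (y * L) + I * Br = 0).
    { apply Rmult_eq_reg_l with g; [|lra]. lra. }
    assert (h1 : (P ^ 2 + I ^ 2) * (Br ^ 2 + (y * L) ^ 2) = K2 ^ 2).
    { replace ((P ^ 2 + I ^ 2) * (Br ^ 2 + (y * L) ^ 2)) with
        ((P * Br - I * (y * L)) ^ 2 + (P * (y * L) + I * Br) ^ 2) by ring.
      rewrite e1, e2. ring. }
    assert (h2 : (y * L) * (P ^ 2 + I ^ 2) = K2 * I).
    { replace ((y * L) * (P ^ 2 + I ^ 2)) with (P * (P * (y * L) + I * Br) - I * (P * Br - I * (y * L))) by ring.
      rewrite e1, e2. ring. }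
    assert (hPI : P ^ 2 + I ^ 2 <> 0).
    { intro Z. rewrite Z in h1. assert (0 < K2 ^ 2) by (apply pow_lt; lra). lra. }
    assert (h3 : I * (Br ^ 2 + (y * L) ^ 2) = y * L * K2).
    { apply Rmult_eq_reg_l with (P ^ 2 + I ^ 2); auto.
      transitivity (I * K2 ^ 2). rewrite <- h1. ring.
      transitivity (K2 * ((y * L) * (P ^ 2 + I ^ 2))). rewrite h2. ring. ring. }
    assert (h4 : L * K2 = - (c * a * W * (Br ^ 2 + (y * L) ^ 2))).
    { apply Rmult_eq_reg_l with y; auto.
      transitivity (I * (Br ^ 2 + (y * L) ^ 2)). rewrite h3. ring.
      unfold I. rewrite HSIW. ring. }
    assert (HW0 : 0 < W).
    { assert (0 < 1 / Dn 0%nat) by (apply Rdiv_lt_0_compat; [lra|apply HD]). lra. }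
    assert (HL : L <= 0).
    { assert (0 <= c * a * W * (Br ^ 2 + (y * L) ^ 2)).
      { apply Rmult_le_pos. apply Rmult_le_pos. apply Rmult_le_pos; lra. lra. nra. }
      nra. }
    assert (Hx0 : x <= 0) by (unfold L in HL; nra).
    destruct (Rle_or_lt (x / t) (- s0)) as [Hle|Hlt].
    { apply acos_mono; lra. }
    exfalso.
    assert (Htpos : 0 < t).
    { apply sqrt_lt_R0. nra. }
    assert (Hxs : - x < s0 * t).
    { assert (- s0 * t < x).
      { apply Rmult_lt_compat_r with (r := t) in Hlt; auto.
        unfold Rdiv in Hlt. rewrite Rmult_assoc, Rinv_l in Hlt by lra. lra. }
      lra. }
    assert (Hx2 : x ^ 2 < s0 ^ 2 * t ^ 2) by nra.
    rewrite Ht2 in Hx2.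
    set (S2 := 2 * s0 ^ 2) in *.
    assert (HS2a : x ^ 2 <= S2 * y ^ 2).
    { unfold S2. assert (s0 ^ 2 <= 1 / 16) by nra. nra. }
    assert (HS2b : S2 <= 1 / 8) by (unfold S2; nra).
    assert (Hxy : x ^ 2 <= y ^ 2 / 8) by nra.
    assert (HBr : Br <= - (q + 7 / 8 * rr * y ^ 2)).
    { unfold Br. assert (rr * x ^ 2 <= rr * (y ^ 2 / 8)) by (apply Rmult_le_compat_l; lra).
      assert (m * x <= 0).
      { assert (0 <= m * - x) by (apply Rmult_le_pos; lra).
        replace (m * x) with (- (m * - x)) by ring. lra. }
      lra. }
    assert (HT0 : 0 <= q + 7 / 8 * rr * y ^ 2).
    { assert (0 <= rr * y ^ 2) by (apply Rmult_le_pos; lra). lra. }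
    assert (HBr2 : (q + 7 / 8 * rr * y ^ 2) ^ 2 <= Br ^ 2).
    { replace (Br ^ 2) with ((- Br) ^ 2) by ring. apply pow_incr; lra. }
    assert (HD0b : Dn 0%nat <= 2 * a ^ 2 + 2 * y ^ 2).
    { rewrite HD0. assert (0 <= (a - x) ^ 2) by apply pow2_ge_0. lra. }
    assert (HD0p : 0 < Dn 0%nat) by apply HD.
    assert (Hk : c * a * W * Br ^ 2 <= (- L) * K2).
    { replace (- L * K2) with (- (L * K2)) by ring. rewrite h4.
      assert (0 <= c * a * W * (y * L) ^ 2).
      { apply Rmult_le_pos; [|apply pow2_ge_0]. apply Rmult_le_pos; [|lra]. apply Rmult_le_pos; lra. }
      replace (- (c * a * W * (Br ^ 2 + (y * L) ^ 2))) with (- (c * a * W * Br ^ 2) - c * a * W * (y * L) ^ 2) by ring.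
      lra. }
    assert (HX2 : (- x) ^ 2 <= S2 * y ^ 2) by (replace ((- x) ^ 2) with (x ^ 2) by ring; lra).
    assert (HS20 : 0 <= S2) by (unfold S2; assert (0 <= s0 ^ 2) by apply pow2_ge_0; lra).
    assert (HnL : 0 <= - L) by lra.
    assert (HnLX : - L <= 2 * rr * (- x)) by (unfold L; lra).
    pose proof (tail_ineq a c rr K2 q m0 S2 (- x) (y ^ 2) Br (- L) (Dn 0%nat) W Ha Hc Hrr HK2 Hq
      (Rmin_l _ _) (Rmin_r _ _) ltac:(lra) ltac:(lra) HX2 HS20 HD0p HD0b HW HBr2 HnL HnLX Hk) as Hfin.
    assert (Hden : 0 < 16 * rr ^ 2 * K2 ^ 2 * (a ^ 2 + 1) ^ 2).
    { assert (0 < rr ^ 2) by (apply pow_lt; lra). assert (0 < K2 ^ 2) by (apply pow_lt; lra).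
      assert (0 < (a ^ 2 + 1) ^ 2) by (apply pow_lt; assert (0 <= a ^ 2) by apply pow2_ge_0; lra).
      apply Rmult_lt_0_compat; [|lra]. apply Rmult_lt_0_compat; [|lra]. lra. }
    assert (Mval <= S2).
    { unfold Mval. apply Rmult_le_reg_r with (16 * rr ^ 2 * K2 ^ 2 * (a ^ 2 + 1) ^ 2); auto.
      unfold Rdiv. rewrite Rmult_assoc, Rinv_l by lra.
      replace (S2 * (16 * rr ^ 2 * K2 ^ 2 * (a ^ 2 + 1) ^ 2)) with (16 * rr ^ 2 * K2 ^ 2 * S2 * (a ^ 2 + 1) ^ 2) by ring.
      lra. }
    unfold S2 in *. lra.
Qed.
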